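(* Let $P$ be a finite graded poset with $\hat0$ and let $\lambda$ be an ER-labeling of $P$ satisfying the rank two switching property, the braid relation and the cancellative property. Then the edge labeling $\lambda^*$ of $Q_\lambda(P)$ defined by $\lambda^*(X\lessdot Y)=S(Y)\setminus S(X)$ is an ER$^*$-labeling, i.e., every closed interval of $Q_\lambda(P)$ has exactly one ascent-free maximal chain.
   Context: An E-labeling is a map $\lambda$ from the cover relations of $P$ to a poset $\Lambda$. The word of labels of a saturated chain $x_0\lessdot\cdots\lessdot x_\ell$ is $\lambda(x_0\lessdot x_1)\cdots\lambda(x_{\ell-1}\lessdot x_\ell)$; the chain is increasing if the word is strictly increasing, ascent-free if no $i$ has $\lambda(x_{i-1}\lessdot x_i)<\lambda(x_i\lessdot x_{i+1})$. ER-labeling: every closed interval has exactly one increasing maximal chain. Rank two switching property: for every saturated chain $\hat0=x_0\lessdot\cdots\lessdot x_k$ and every $i$ with $\lambda(x_{i-1}\lessdot x_i)<\lambda(x_i\lessdot x_{i+1})$ there is a unique $x_i'$ with $x_{i-1}\lessdot x_i'\lessdot x_{i+1}$, $\lambda(x_{i-1}\lessdot x_i')=\lambda(x_i\lessdot x_{i+1})$, $\lambda(x_i'\lessdot x_{i+1})=\lambda(x_{i-1}\lessdot x_i)$. Quadratic exchange: for a maximal chain $\mathbf c$ of an interval with an ascent at position $i$, $U_i(\mathbf c)$ replaces $x_i$ by $x_i'$; otherwise $U_i(\mathbf c)=\mathbf c$. For maximal chains $\mathbf c_1,\mathbf c_2$ of an interval $[x,y]$ write $\mathbf c_1\sim_\lambda\mathbf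 c_2$ if they are connected by a sequence of quadratic exchanges (applied forwards or backwards) within $[x,y]$. Braid relation: for every maximal chain $\mathbf c$ of any interval with three strictly increasing consecutive labels at positions $i,i+1,i+2$, $U_iU_{i+1}U_i(\mathbf c)=U_{i+1}U_iU_{i+1}(\mathbf c)$. Cancellative property: for all $z<x<y$ in $P$, every maximal chain $\mathbf c$ of $[z,x]$ and maximal chains $\mathbf c_1,\mathbf c_2$ of $[x,y]$, $\mathbf c\cup\mathbf c_1\sim_\lambda\mathbf c\cup\mathbf c_2$ (in $[z,y]$) implies $\mathbf c_1\sim_\lambda\mathbf c_2$ (in $[x,y]$). $Q_\lambda(P)$: $C(P)$ is the set of saturated chains of $P$ starting at $\hat0$ ordered by inclusion; $e(\mathbf c)$ is the top element of $\mathbf c$. For $\mathbf c_1,\mathbf c_2\in C(P)$, $\mathbf c_1\sim\mathbf c_2$ iff $e(\mathbf c_1)=e(\mathbf c_2)=y$ and $\mathbf c_1\sim_\lambda\mathbf c_2$ in $[\hat0,y]$. $Q_\lambda(P)$ is the set of classes ordered by the transitive closure of: $X\le Y$ if some $\mathbf c\in X$, $\mathbf d\in Y$ satisfy $\mathbf c\subseteq\mathbf d$. All chains in a class $X$ have the same multiset $S(X)$ of labels (the multiset of labels of its cover relations), and if $X\lessdot Y$ then $S(Y)\setminus S(X)$ (multiset difference) consists of a single label. *)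

(* Defs.v *)
From mathcomp Require Import all_boot all_order.
From Stdlib Require Import Relations.
Set Implicit Arguments.
Unset Strict Implicit.
Unset Printing Implicit Defensive.
Import Order.Theory.
Local Open Scope order_scope.

(* Saturated chains x_0 <. x_1 <. ... <. x_l are represented by
   the sequence [:: x_0; ...; x_l] (consecutive elements related by covers). *)

Section ChainDefs.
Context {d : Order.disp_t} {P : finPOrderType d}.

Definition cover (x y : P) : bool :=
  (x < y) && [forall z : P, ~~ ((x < z) && (z < y))].

Definition maxchain (x y : P) (c : seq P) : bool :=
  match c with
  | [::] => false
  | x0 :: s => [&& x0 == x, path cover x0 s & last x0 s == y]
  end.

Definition graded (bot : P) : Prop :=
  exists rk : P -> nat, rk bot = 0%N /\ forall x y, cover x y -> rk y = (rk x).+1.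

Context {d' : Order.disp_t} {L : porderType d'} (lam : P -> P -> L).

Definition labels (c : seq P) : seq L :=
  match c with [::] => [::] | x0 :: s => pairmap lam x0 s end.

Definition ER_labeling : Prop :=
  forall x y : P, x <= y ->
    exists! c : seq P, maxchain x y c && sorted <%O (labels c).

Definition switching (bot : P) : Prop :=
  forall s : seq P, path cover bot s ->
  forall i : nat, (0 < i)%N -> (i < size s)%N ->
    let c := bot :: s in
    let a := nth bot c i.-1 in let b := nth bot c i in let e := nth bot c i.+1 in
    lam a b < lam b e ->
    exists! b' : P, [/\ cover a b', cover b' e, lam a b' = lam b e & lam b' e = lam a b].

(* quadratic exchange U_i (positions 0..l of the chain [:: x_0; ...; x_l]) *)
Definition U (i : nat) (c : seq P) : seq P :=
  match c with
  | [::] => [::]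
  | x0 :: _ =>
    let a := nth x0 c i.-1 in let b := nth x0 c i in let e := nth x0 c i.+1 in
    if [&& (0 < i)%N, (i.+1 < size c)%N & lam a b < lam b e] then
      match [pick z : P | [&& cover a z, cover z e, lam a z == lam b e & lam z e == lam a b]] with
      | Some z => set_nth x0 c i z
      | None => c
      end
    else c
  end.

Definition qstep (x y : P) (c1 c2 : seq P) : Prop :=
  maxchain x y c1 /\ maxchain x y c2 /\ exists i, c2 = U i c1 \/ c1 = U i c2.

Definition lam_equiv (x y : P) (c1 c2 : seq P) : Prop :=
  [/\ maxchain x y c1, maxchain x y c2 & clos_refl_trans (seq P) (qstep x y) c1 c2].

Definition braid : Prop :=
  forall (x y : P) (c : seq P) (i : nat), maxchain x y c ->
  (0 < i)%N -> (i.+2 < size c)%N ->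
  let z i := nth x c i in
  lam (z i.-1) (z i) < lam (z i) (z i.+1) ->
  lam (z i) (z i.+1) < lam (z i.+1) (z i.+2) ->
  U i (U i.+1 (U i c)) = U i.+1 (U i (U i.+1 c)).

Definition cancellative : Prop :=
  forall (z x y : P), z < x -> x < y ->
  forall c c1 c2 : seq P, maxchain z x c -> maxchain x y c1 -> maxchain x y c2 ->
  lam_equiv z y (c ++ behead c1) (c ++ behead c2) -> lam_equiv x y c1 c2.

(* ---- The poset Q_lambda(P); its elements (classes) are represented by
        representative chains, equality of classes being [clsrel]. ---- *)
Variable bot : P.

Definition inC (c : seq P) : bool :=
  match c with [::] => false | x0 :: s => (x0 == bot) && path cover x0 s end.

Definition clsrel (c1 c2 : seq P) : Prop :=
  [/\ inC c1, inC c2, last bot c1 = last bot c2 & lam_equiv bot (last bot c1) c1 c2].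

Definition Qle0 (c e : seq P) : Prop :=
  [/\ inC c, inC e & exists c' e', [/\ clsrel c c', clsrel e e' & {subset c' <= e'}]].

Definition Qle (c e : seq P) : Prop := clos_trans (seq P) Qle0 c e.
Definition Qlt (c e : seq P) : Prop := Qle c e /\ ~ clsrel c e.
Definition Qcover (c e : seq P) : Prop :=
  Qlt c e /\ ~ (exists f, inC f /\ Qlt c f /\ Qlt f e).

Definition mdiff (s t : seq L) : seq L := foldl (fun acc l => rem l acc) s t.

(* lambda^*(X <. Y) = S(Y) \ S(X), when this is a single label *)
Definition lamstar (c e : seq P) : option L :=
  match mdiff (labels e) (labels c) with
  | [:: l] => if perm_eq (labels e) (l :: labels c) then Some l else None
  | _ => None
  end.

Definition Qmaxchain (X Y : seq P) (cs : seq (seq P)) : Prop :=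
  [/\ (0 < size cs)%N, clsrel X (nth [::] cs 0), clsrel Y (last [::] cs)
    & forall j, (j.+1 < size cs)%N -> Qcover (nth [::] cs j) (nth [::] cs j.+1)].

Definition Qascent_free (cs : seq (seq P)) : Prop :=
  forall j, (j.+2 < size cs)%N -> forall l1 l2 : L,
    lamstar (nth [::] cs j) (nth [::] cs j.+1) = Some l1 ->
    lamstar (nth [::] cs j.+1) (nth [::] cs j.+2) = Some l2 -> ~ (l1 < l2).

Definition ER_star : Prop :=
  forall X Y : seq P, inC X -> inC Y -> Qle X Y ->
    (exists cs, Qmaxchain X Y cs /\ Qascent_free cs) /\
    (forall cs cs', Qmaxchain X Y cs -> Qascent_free cs ->
                    Qmaxchain X Y cs' -> Qascent_free cs' ->
       size cs = size cs' /\ forall j, (j < size cs)%N -> clsrel (nth [::] cs j) (nth [::] cs' j)).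

End ChainDefs.

(* Main.v *)
Require Import Defs.
From mathcomp Require Import all_boot all_order.
From Stdlib Require Import Relations.
From mathcomp Require Import zify.
Import Order.Theory.
Set Implicit Arguments. Unset Strict Implicit. Unset Printing Implicit Defensive.

Section Inv.
Context {d' : Order.disp_t} {L : porderType d'}.

Fixpoint inv (s : seq L) : nat :=
  match s with [::] => 0 | x :: s' => count (fun y => (y < x)%O) s' + inv s' end.

Lemma inv_swap (l1 l2 : seq L) (A B : L) : (A < B)%O ->
  inv (l1 ++ A :: B :: l2) < inv (l1 ++ B :: A :: l2).
Proof.
move=> AB; elim: l1 => [|x l1 IH] /=.
  have -> : (B < A)%O = false by rewrite lt_gtF.
  rewrite AB /=; lia.
rewrite !count_cat /=; lia.
Qed.

Lemma inv_le (s : seq L) : inv s <= size s * size s.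
Proof.
elim: s => //= x s IH; have := count_size (fun y => (y < x)%O) s.
move: (count _ _) (inv s) (size s) IH => a b n; nia.
Qed.

Lemma mdiff_perm (t s u : seq L) : perm_eq s (t ++ u) -> perm_eq (mdiff s t) u.
Proof.
elim: t s => [|x t IH] s //= H.
apply: IH.
have xs : x \in s by rewrite (perm_mem H) inE eqxx.
have := perm_to_rem xs; rewrite perm_sym => H2.
by rewrite -(perm_cons x) (perm_trans H2).
Qed.

End Inv.

Section Main.
Context {d : Order.disp_t} {P : finPOrderType d} {d' : Order.disp_t} {L : porderType d'}.
Variable lam : P -> P -> L.
Variable bot : P.
Hypothesis Hbot : forall x : P, (bot <= x)%O.
Hypothesis HER : ER_labeling lam.
Hypothesis Hsw : switching lam bot.

Definition hd (c : seq P) := head bot c.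
Definition nthc (c : seq P) k := nth (hd c) c k.
Definition asc (c : seq P) i :=
  [&& 0 < i, i.+1 < size c &
      (lam (nthc c i.-1) (nthc c i) < lam (nthc c i) (nthc c i.+1))%O].
Definition Zp (a b e : P) :=
  [pick z : P | [&& Defs.cover a z, Defs.cover z e, lam a z == lam b e & lam z e == lam a b]].
Definition okc (c : seq P) :=
  match c with [::] => false | x0 :: s => path Defs.cover x0 s end.
Notation UU := (U lam).

Lemma U_def i c : UU i c = if asc c i then
   match Zp (nthc c i.-1) (nthc c i) (nthc c i.+1) with
   | Some z => set_nth (hd c) c i z | None => c end else c.
Proof. case: c => [|x0 s] //=; by rewrite /asc andbF. Qed.

Lemma U_triv i c : ~~ asc c i -> UU i c = c.
Proof. by rewrite U_def => /negbTE ->. Qed.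

Lemma chain_from_bot x : exists sb, path Defs.cover bot sb /\ last bot sb = x.
Proof.
have [c [/andP [Hc _] _]] := HER (Hbot x).
case: c Hc => // x0 s /and3P [/eqP -> Hp /eqP Hl]; by exists s.
Qed.

Lemma U_asc c i : okc c -> asc c i -> exists z,
  [/\ UU i c = set_nth (hd c) c i z, Defs.cover (nthc c i.-1) z, Defs.cover z (nthc c i.+1),
      lam (nthc c i.-1) z = lam (nthc c i) (nthc c i.+1)
    & lam z (nthc c i.+1) = lam (nthc c i.-1) (nthc c i)].
Proof.
case: c => // x0 s Hp Ha.
rewrite U_def Ha.
have Ha' := Ha; move: Ha' => /and3P [i0 isz _].
have [sb [Hsb Hl]] := chain_from_bot x0.
set B := belast bot sb.
have EB : bot :: sb ++ s = B ++ x0 :: s.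
  by rewrite -cat_cons lastI Hl cat_rcons.
have Hps : path Defs.cover bot (sb ++ s) by rewrite cat_path Hsb Hl.
have sB : size B = size sb by rewrite size_belast.
have H1 : 0 < size B + i by lia.
have H2 : size B + i < size (sb ++ s) by rewrite size_cat -sB /=; move: isz => /=; lia.
have := Hsw Hps H1 H2.
have Enth : forall k, k < size (x0 :: s) -> nth bot (bot :: sb ++ s) (size B + k) = nthc (x0 :: s) k.
  move=> k hk; rewrite EB nth_cat ltnNge leq_addr /= addKn.
  by rewrite /nthc (set_nth_default x0).
have -> : (size B + i).-1 = size B + i.-1 by lia.
have -> : (size B + i).+1 = size B + i.+1 by lia.
rewrite /= !Enth; try (move: isz => /=; lia).
move=> Hex.
rewrite /Zp; case: pickP => [z /and4P [c1 c2 /eqP e1 /eqP e2] | Hn].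
  by exists z.
exfalso; move: Ha => /and3P [_ _ Hlt]; case: (Hex Hlt) => b' [[c1 c2 e1 e2] _].
by have := Hn b'; rewrite c1 c2 e1 e2 !eqxx.
Qed.


Lemma asc_size c i : asc c i -> 0 < i /\ i.+1 < size c.
Proof. by case/and3P. Qed.

Lemma decomp c i : 0 < i -> i.+1 < size c ->
  c = take i.-1 c ++ [:: nthc c i.-1, nthc c i, nthc c i.+1 & drop i.+2 c].
Proof.
case: i => // j _ isz /=.
rewrite -{1}(cat_take_drop j c); congr (_ ++ _).
rewrite /nthc (drop_nth (hd c)); last by lia.
rewrite (drop_nth (hd c)); last by lia.
by rewrite (drop_nth (hd c) (n := j.+2)); last by lia.
Qed.

Lemma decomp_set c i z : 0 < i -> i.+1 < size c ->
  set_nth (hd c) c i z = take i.-1 c ++ [:: nthc c i.-1, z, nthc c i.+1 & drop i.+2 c].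
Proof.
case: i => // j _ isz /=.
rewrite set_nthE ifT; last by lia.
rewrite (take_nth (hd c)); last by lia.
by rewrite (drop_nth (hd c)) // cat_rcons.
Qed.

Lemma okc_decomp p a m e q : okc (p ++ [:: a, m, e & q]) =
  [&& okc (rcons p a), Defs.cover a m, Defs.cover m e & path Defs.cover e q].
Proof.
case: p => [|x p] /=; first by rewrite !andbA.
by rewrite -cat_rcons cat_path last_rcons /=.
Qed.

Lemma labels_decomp p a m e q : labels lam (p ++ [:: a, m, e & q]) =
  labels lam (rcons p a) ++ [:: lam a m, lam m e & labels lam (e :: q)].
Proof.
case: p => [|x p] //=.
by rewrite -cat_rcons pairmap_cat last_rcons.
Qed.


Lemma hd_set c i z : 0 < i -> i < size c -> hd (set_nth (hd c) c i z) = hd c.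
Proof. by case: c => // x s; case: i. Qed.

Lemma U_props c i : okc c ->
  [/\ size (UU i c) = size c, hd (UU i c) = hd c, last bot (UU i c) = last bot c,
      okc (UU i c) & perm_eq (labels lam (UU i c)) (labels lam c)].
Proof.
move=> Hok; case Ha: (asc c i); last by rewrite U_triv ?Ha.
have [z [EU c1 c2 e1 e2]] := U_asc Hok Ha.
have [i0 isz] := asc_size Ha.
have Ed := decomp i0 isz; have Es := decomp_set z i0 isz.
rewrite EU; split.
- rewrite size_set_nth; lia.
- by rewrite hd_set //; lia.
- have -> : last bot c = last bot (take i.-1 c ++ [:: nthc c i.-1, nthc c i, nthc c i.+1 & drop i.+2 c]) by rewrite -Ed.
  by rewrite Es !last_cat.
- have := Hok; rewrite {1}Ed okc_decomp => /and4P [A _ _ B].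
  by rewrite Es okc_decomp c1 c2 A B.
- have -> : labels lam c = labels lam (take i.-1 c ++ [:: nthc c i.-1, nthc c i, nthc c i.+1 & drop i.+2 c]) by rewrite -Ed.
  rewrite Es !labels_decomp e1 e2 perm_cat2l; apply/permP => f /=; by rewrite addnCA.
Qed.

Lemma U_labels c i : okc c -> asc c i -> exists l1 l2 A B,
  [/\ (A < B)%O, labels lam c = l1 ++ A :: B :: l2 & labels lam (UU i c) = l1 ++ B :: A :: l2].
Proof.
move=> Hok Ha.
have [z [EU c1 c2 e1 e2]] := U_asc Hok Ha.
have [i0 isz] := asc_size Ha.
have Ed := decomp i0 isz; have Es := decomp_set z i0 isz.
exists (labels lam (rcons (take i.-1 c) (nthc c i.-1))), (labels lam (nthc c i.+1 :: drop i.+2 c)).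
exists (lam (nthc c i.-1) (nthc c i)), (lam (nthc c i) (nthc c i.+1)).
split; first by case/and3P: Ha.
- by rewrite {1}Ed labels_decomp.
- by rewrite EU Es labels_decomp e1 e2.
Qed.

Lemma nthc_U c i z k : 0 < i -> i < size c ->
  nthc (set_nth (hd c) c i z) k = if k == i then z else nthc c k.
Proof.
move=> i0 isz; rewrite /nthc hd_set // nth_set_nth /=.
by case: eqP.
Qed.


Definition step (c e : seq P) := okc c /\ exists i, asc c i /\ e = UU i c.
Definition normal (c : seq P) := forall i, ~~ asc c i.
Definition mu (c : seq P) := size c * size c - inv (labels lam c).

Lemma size_labels c : size (labels lam c) <= size c.
Proof. by case: c => //= x s; rewrite size_pairmap. Qed.

Lemma step_mu c e : step c e -> mu e < mu c.
Proof.
move=> [Hok [i [Ha ->]]].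
have [l1 [l2 [A [B [AB E1 E2]]]]] := U_labels Hok Ha.
have [Hs _ _ _ _] := U_props i Hok.
have := inv_swap l1 l2 AB; rewrite -E1 -E2 => Hi.
have := inv_le (labels lam (UU i c)); have := size_labels (UU i c).
rewrite /mu Hs; move: (inv _) (inv _) (size (labels _ _)) Hi => a b n; nia.
Qed.

Lemma step_ok c e : step c e -> okc e.
Proof. by move=> [Hok [i [_ ->]]]; have [_ _ _ -> _] := U_props i Hok. Qed.

Lemma rt_ok c e : clos_refl_trans _ step c e -> okc c -> okc e.
Proof. by elim=> // [x y /step_ok|x y z _ IH1 _ IH2 /IH1 /IH2]. Qed.

Lemma asc_lt c i : asc c i -> i < size c.
Proof. by case/and3P => _ H _; lia. Qed.

Lemma nf_exists c : okc c -> exists n, clos_refl_trans _ step c n /\ normal n.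
Proof.
have [n] := ubnP (mu c); elim: n c => // n IH c Hn Hok.
case Hh: (has (asc c) (iota 0 (size c))).
  case/hasP: Hh => i _ Ha.
  have Hst : step c (UU i c) by split => //; exists i.
  have [m [Hm Hnm]] := IH (UU i c) (leq_trans (step_mu Hst) Hn) (step_ok Hst).
  exists m; split => //; apply: rt_trans Hm; exact: rt_step.
exists c; split; first exact: rt_refl.
move=> i; apply/negP => Ha; move/negP: Hh; apply; apply/hasP; exists i => //.
by rewrite mem_iota /= add0n asc_lt.
Qed.


Lemma asc_set c i z j : 0 < i -> i < size c -> i != j.-1 -> i != j -> i != j.+1 ->
  asc (set_nth (hd c) c i z) j = asc c j.
Proof.
move=> i0 isz h1 h2 h3.
rewrite /asc !nthc_U // size_set_nth.
rewrite ![_ == i]eq_sym (negbTE h1) (negbTE h2) (negbTE h3).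
by have -> : maxn i.+1 (size c) = size c by lia.
Qed.

Lemma U_set_far c i z j : 0 < i -> i < size c -> i != j.-1 -> i != j -> i != j.+1 ->
  UU j (set_nth (hd c) c i z) =
  if asc c j then match Zp (nthc c j.-1) (nthc c j) (nthc c j.+1) with
   | Some w => set_nth (hd c) (set_nth (hd c) c i z) j w | None => set_nth (hd c) c i z end
  else set_nth (hd c) c i z.
Proof.
move=> i0 isz h1 h2 h3.
rewrite U_def asc_set // !nthc_U // hd_set //.
by rewrite ![_ == i]eq_sym (negbTE h1) (negbTE h2) (negbTE h3).
Qed.

Lemma commute c i j : okc c -> asc c i -> asc c j -> i.+1 < j ->
  UU j (UU i c) = UU i (UU j c).
Proof.
move=> Hok Hi Hj ij.
have [i0 isz] := asc_size Hi; have [j0 jsz] := asc_size Hj.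
rewrite (U_def i c) (U_def j c) Hi Hj.
case E1: (Zp (nthc c i.-1) (nthc c i) (nthc c i.+1)) => [z|];
case E2: (Zp (nthc c j.-1) (nthc c j) (nthc c j.+1)) => [w|].
- rewrite U_set_far //; try lia.
  rewrite Hj E2 U_set_far //; try lia.
  rewrite Hi E1 set_set_nth ifN //; lia.
- by rewrite U_set_far ?Hj ?E2 ?U_def ?Hi ?E1 //; lia.
- rewrite U_set_far ?Hi ?E1 ?U_def ?Hj ?E2 //; lia.
- by rewrite U_def Hj E2 U_def Hi E1.
Qed.


Hypothesis Hbr : braid lam.

Lemma ok_maxchain c : okc c -> maxchain (hd c) (last bot c) c.
Proof. by case: c => //= x s ->; rewrite !eqxx. Qed.

Lemma braid_conf c i : okc c -> asc c i -> asc c i.+1 ->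
  exists e, clos_refl_trans _ step (UU i c) e /\ clos_refl_trans _ step (UU i.+1 c) e.
Proof.
move=> Hok Hi Hi1.
have [i0 isz] := asc_size Hi; have [_ isz1] := asc_size Hi1.
have F1 : (i.+1 == i) = false by rewrite gtn_eqF.
have F2 : (i.-1 == i) = false by rewrite ltn_eqF // prednK.
have F3 : (i.+2 == i.+1) = false by rewrite gtn_eqF.
have F4 : (i.-1 == i.+1) = false by rewrite ltn_eqF // prednK // ltnW.
have F5 : (i == i.+1) = false by rewrite ltn_eqF.
have F6 : (i.+2 == i) = false by rewrite gtn_eqF // ltnW.
have s0 : i < size c by rewrite ltnW.
have i1 : 0 < i.+1 by [].
have LT1 := Hi; move: LT1 => /and3P [_ _ LT1].
have LT2 := Hi1; move: LT2 => /and3P [_ _ LT2]; rewrite /= in LT2.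
have [z1 [E1 a1 b1 e1 f1]] := U_asc Hok Hi.
have [S1 H1 _ Ok1 _] := U_props i Hok.
have A1 : asc (UU i c) i.+1.
  rewrite /asc S1 isz1 /= E1 !nthc_U ?eqxx ?F1 ?F6 //.
  by rewrite f1; apply: lt_trans LT1 LT2.
have [w1 [E1' a1' b1' e1' f1']] := U_asc Ok1 A1.
have [S1' H1' _ Ok1' _] := U_props i.+1 Ok1.
have A1' : asc (UU i.+1 (UU i c)) i.
  rewrite /asc S1' S1 i0 isz /=.
  rewrite E1' !nthc_U ?S1 ?eqxx ?F5 ?F4 //.
  rewrite E1 !nthc_U ?eqxx ?F2 //.
  move: e1'; rewrite /= E1 !nthc_U ?eqxx ?F1 ?F6 // => ->.
  by rewrite e1.
have [z2 [E2 a2 b2 e2 f2]] := U_asc Hok Hi1.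
have [S2 H2 _ Ok2 _] := U_props i.+1 Hok.
have A2 : asc (UU i.+1 c) i.
  rewrite /asc S2 i0 isz /=.
  rewrite E2 !nthc_U ?eqxx ?F2 ?F4 ?F5 //.
  rewrite /= in e2; rewrite e2; apply: lt_trans LT1 LT2.
have [w2 [E2' a2' b2' e2' f2']] := U_asc Ok2 A2.
have [S2' H2' _ Ok2' _] := U_props i Ok2.
have A2' : asc (UU i (UU i.+1 c)) i.+1.
  rewrite /asc S2' S2 isz1 /=.
  rewrite E2' !nthc_U ?S2 ?eqxx ?F1 ?F6 //.
  rewrite E2 !nthc_U ?eqxx ?F5 ?F3 //.
  move: f2'; rewrite E2 !nthc_U ?eqxx ?F2 ?F4 ?F5 // => ->.
  by rewrite f2.
exists (UU i (UU i.+1 (UU i c))); split.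
  apply: rt_trans; apply: rt_step; split; eauto.
rewrite (Hbr (ok_maxchain Hok) i0 isz1 LT1 LT2).
apply: rt_trans; apply: rt_step; split; eauto.
Qed.


Notation rts := (clos_refl_trans _ step).

Lemma rt_U c j : okc c -> rts c (UU j c).
Proof.
move=> Hok; case Ha: (asc c j); last by rewrite U_triv ?Ha //; exact: rt_refl.
by apply: rt_step; split => //; exists j.
Qed.

Lemma locconf_aux c i j : okc c -> asc c i -> asc c j -> i < j ->
  exists e, rts (UU i c) e /\ rts (UU j c) e.
Proof.
move=> Hok Hi Hj ij.
case: (ltngtP i.+1 j) => h.
- exists (UU j (UU i c)); split; first by apply: rt_U; have [_ _ _ -> _] := U_props i Hok.
  rewrite commute //; apply: rt_U; by have [_ _ _ -> _] := U_props j Hok.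
- lia.
- by rewrite -h; apply: braid_conf => //; rewrite h.
Qed.

Lemma locconf c c1 c2 : step c c1 -> step c c2 -> exists e, rts c1 e /\ rts c2 e.
Proof.
move=> [Hok [i [Hi ->]]] [_ [j [Hj ->]]].
case: (ltngtP i j) => h.
- exact: locconf_aux.
- by have [e [? ?]] := locconf_aux Hok Hj Hi h; exists e.
- by rewrite h; exists (UU j c); split; apply: rt_refl.
Qed.

Lemma normal_rt c e : normal c -> rts c e -> e = c.
Proof.
move=> Hn R; case: (clos_rt_rt1n _ _ _ _ R) => // y z [_ [i [Hi _]]] _.
by have := Hn i; rewrite Hi.
Qed.

Lemma nf_unique c : okc c -> forall n1 n2, rts c n1 -> rts c n2 -> normal n1 -> normal n2 -> n1 = n2.
Proof.
have [n] := ubnP (mu c); elim: n c => // n IH c Hn Hok n1 n2 R1 R2 N1 N2.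
have R1x := clos_rt_rt1n _ _ _ _ R1; clear R1.
case: n1 / R1x N1 => [|c1 n1 S1 R1'] N1.
  by rewrite (normal_rt N1 R2).
have R2x := clos_rt_rt1n _ _ _ _ R2; clear R2.
case: n2 / R2x N2 => [|c2 n2 S2 R2'] N2.
  by have R1'' := clos_rt1n_rt _ _ _ _ R1'; rewrite (normal_rt N2 (rt_trans _ _ _ _ _ (rt_step _ _ _ _ S1) R1'')).
have R1 := clos_rt1n_rt _ _ _ _ R1'; have R2 := clos_rt1n_rt _ _ _ _ R2'.
have [e [Re1 Re2]] := locconf S1 S2.
have Ok1 := step_ok S1; have Ok2 := step_ok S2.
have [m [Rm Nm]] := nf_exists (rt_ok Re1 Ok1).
have M1 := leq_trans (step_mu S1) Hn; have M2 := leq_trans (step_mu S2) Hn.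
rewrite (IH c1 M1 Ok1 n1 m R1 (rt_trans _ _ _ _ _ Re1 Rm) N1 Nm).
by rewrite (IH c2 M2 Ok2 m n2 (rt_trans _ _ _ _ _ Re2 Rm) R2 Nm N2).
Qed.


Lemma maxchainE x y c : maxchain x y c = [&& okc c, hd c == x & last bot c == y].
Proof. by case: c => //= x0 s; rewrite andbCA. Qed.

Lemma inC_max c : inC bot c = maxchain bot (last bot c) c.
Proof. by case: c => //= x s; rewrite eqxx andbT. Qed.

Lemma qstep_cases x y a b : qstep lam x y a b -> a = b \/ step a b \/ step b a.
Proof.
move=> [Ha [Hb [i [E|E]]]].
- case Hs: (asc a i); last by left; rewrite E U_triv ?Hs.
  right; left; split; first by move: Ha; rewrite maxchainE => /and3P [].
  by exists i.
- case Hs: (asc b i); last by left; rewrite E U_triv ?Hs.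
  right; right; split; first by move: Hb; rewrite maxchainE => /and3P [].
  by exists i.
Qed.

Lemma step_iff a b n : step a b -> normal n -> (rts a n <-> rts b n).
Proof.
move=> S Nn; split; last by apply: rt_trans; apply: rt_step.
move=> Ra; have [m [Rm Nm]] := nf_exists (step_ok S).
have [Hok _] := S.
by rewrite (nf_unique Hok Ra (rt_trans _ _ _ _ _ (rt_step _ _ _ _ S) Rm) Nn Nm).
Qed.

Lemma LE_normal x y a b : lam_equiv lam x y a b -> normal a -> normal b -> a = b.
Proof.
move=> [_ _ R] Na Nb.
suff H : forall n, normal n -> (rts a n <-> rts b n).
  by apply: (normal_rt Nb); apply/(H a Na); apply: rt_refl.
elim: R => {a b Na Nb} [a b Q|a|a b c _ IH1 _ IH2] n Nn.
- case: (qstep_cases Q) => [->|[S|S]] //; first exact: step_iff.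
  by apply: iff_sym; apply: step_iff.
- by [].
- by apply: iff_trans (IH1 n Nn) (IH2 n Nn).
Qed.

Lemma step_max x y a b : maxchain x y a -> step a b -> maxchain x y b /\ qstep lam x y a b.
Proof.
move=> Ha S; have [Hok [i [Hi E]]] := S.
have [_ Hh Hl Hok' _] := U_props i Hok.
have Hb : maxchain x y b.
  by move: Ha; rewrite !maxchainE E Hh Hl Hok' => /and3P [_ -> ->].
by split => //; split => //; split => //; exists i; left.
Qed.

Lemma nf_LE x y a : maxchain x y a -> exists n, lam_equiv lam x y a n /\ normal n.
Proof.
move=> Ha; have Hok : okc a by move: Ha; rewrite maxchainE => /and3P [].
have [n [R Nn]] := nf_exists Hok; exists n; split => //.
suff : maxchain x y n /\ clos_refl_trans _ (qstep lam x y) a n by case; split.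
elim: R Ha {Hok Nn} => [a' b' S|a'|a' b' c' _ IH1 _ IH2] Ha.
- have [Hb Q] := step_max Ha S; split => //; exact: rt_step.
- by split => //; apply: rt_refl.
- have [Hb R1] := IH1 Ha; have [Hc R2] := IH2 Hb; split => //; exact: rt_trans R1 R2.
Qed.

Lemma LE_refl x y a : maxchain x y a -> lam_equiv lam x y a a.
Proof. by move=> Ha; split => //; apply: rt_refl. Qed.

Lemma qstep_sym x y a b : qstep lam x y a b -> qstep lam x y b a.
Proof. by move=> [Ha [Hb [i [E|E]]]]; split => //; split => //; exists i; [right|left]. Qed.

Lemma LE_sym x y a b : lam_equiv lam x y a b -> lam_equiv lam x y b a.
Proof.
move=> [Ha Hb R]; split => //; elim: R {Ha Hb} => [a' b' Q|a'|a' b' c' _ IH1 _ IH2].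
- by apply: rt_step; apply: qstep_sym.
- exact: rt_refl.
- exact: rt_trans IH2 IH1.
Qed.

Lemma LE_trans x y a b c : lam_equiv lam x y a b -> lam_equiv lam x y b c -> lam_equiv lam x y a c.
Proof. by move=> [Ha _ R1] [_ Hc R2]; split => //; apply: rt_trans R1 R2. Qed.

Lemma qstep_inv x y a b : qstep lam x y a b -> size a = size b /\ perm_eq (labels lam a) (labels lam b).
Proof.
move=> [Ha [Hb [i [E|E]]]].
- have Hok : okc a by move: Ha; rewrite maxchainE => /and3P [].
  by have [? _ _ _ ?] := U_props i Hok; rewrite E perm_sym.
- have Hok : okc b by move: Hb; rewrite maxchainE => /and3P [].
  by have [? _ _ _ ?] := U_props i Hok; rewrite E.
Qed.

Lemma LE_inv x y a b : lam_equiv lam x y a b -> size a = size b /\ perm_eq (labels lam a) (labels lam b).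
Proof.
move=> [_ _ R]; elim: R => [a' b' /qstep_inv //|a'|a' b' c' _ [s1 p1] _ [s2 p2]] //.
by split; [rewrite s1 | apply: perm_trans p1 p2].
Qed.


Lemma U_ext a t i : i.+1 < size a -> UU i (a ++ t) = UU i a ++ t.
Proof.
move=> isz.
have a0 : a != [::] by move: isz; case: a.
have Hh : hd (a ++ t) = hd a by case: a a0 isz.
have Hn : forall k, k < size a -> nthc (a ++ t) k = nthc a k.
  by move=> k hk; rewrite /nthc Hh nth_cat hk.
have Ha : asc (a ++ t) i = asc a i.
  rewrite /asc !Hn ?size_cat; try lia.
rewrite !U_def Ha !Hn ?Hh; try lia.
case: (asc a i) => //; case: (Zp _ _ _) => // z.
rewrite !set_nthE size_cat ifT; last by lia.
have h1 : i < size a by lia.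
have h2 : i.+1 < size a by lia.
by rewrite h1 take_cat drop_cat h1 h2 -catA.
Qed.

Lemma U_shift p a i : 0 < i -> a != [::] -> UU (size p + i) (p ++ a) = p ++ UU i a.
Proof.
move=> i0 a0.
case: (ltnP i.+1 (size a)) => isz; last first.
  have n1 : ~~ asc a i by apply/negP => /and3P [_ h _]; move: h; rewrite ltnNge isz.
  have n2 : ~~ asc (p ++ a) (size p + i).
    apply/negP => /and3P [_ h _]; move: h; rewrite size_cat -addnS ltn_add2l ltnNge.
    by rewrite isz.
  by rewrite !U_triv.
have Hn : forall k, k < size a -> nthc (p ++ a) (size p + k) = nthc a k.
  move=> k hk; rewrite /nthc nth_cat ltnNge leq_addr /= addKn.
  exact: set_nth_default.
have E1 : (size p + i).-1 = size p + i.-1 by lia.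
have Ha : asc (p ++ a) (size p + i) = asc a i.
  rewrite /asc E1 -addnS !Hn ?size_cat; try lia.
  by rewrite ltn_add2l i0 isz addn_gt0 i0 orbT.
rewrite !U_def Ha E1 -addnS !Hn; try lia.
case: (asc a i) => //; case: (Zp _ _ _) => // z.
rewrite !set_nthE size_cat.
have h1 : size p + i < size p + size a by lia.
have h2 : i < size a by lia.
rewrite h1 h2 take_cat drop_cat ltnNge leq_addr /= addKn.
rewrite -addnS ltnNge leq_addr /= addKn.
by rewrite catA.
Qed.


Implicit Types (x y : P) (a b c u v t s X Y : seq P).

Lemma crt_map (R R' : relation (seq P)) (f : seq P -> seq P) a b :
  (forall u v, R u v -> clos_refl_trans _ R' (f u) (f v)) ->
  clos_refl_trans _ R a b -> clos_refl_trans _ R' (f a) (f b).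
Proof.
move=> H; elim => [u v /H //|u|u v w _ IH1 _ IH2]; first exact: rt_refl.
exact: rt_trans IH1 IH2.
Qed.

Lemma maxchain_ext x y c t : maxchain x y c -> path Defs.cover y t -> maxchain x (last y t) (c ++ t).
Proof.
case: c => // x0 s /and3P [/eqP -> Hp /eqP Hl] Ht /=.
by rewrite eqxx cat_path Hp Hl Ht last_cat Hl eqxx.
Qed.

Lemma qstep_ext x y t u v : path Defs.cover y t -> qstep lam x y u v ->
  clos_refl_trans _ (qstep lam x (last y t)) (u ++ t) (v ++ t).
Proof.
move=> Ht Q; have Q' := Q; case: Q' => [Hu [Hv [i Hi]]].
have Mu := maxchain_ext Hu Ht; have Mv := maxchain_ext Hv Ht.
case: Hi => E.
- case: (ltnP i.+1 (size u)) => h.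
    by apply: rt_step; split => //; split => //; exists i; left; rewrite E U_ext.
  have n1 : ~~ asc u i by apply/negP => /and3P [_ h' _]; move: h'; rewrite ltnNge h.
  by rewrite E U_triv //; apply: rt_refl.
- case: (ltnP i.+1 (size v)) => h.
    by apply: rt_step; split => //; split => //; exists i; right; rewrite E U_ext.
  have n1 : ~~ asc v i by apply/negP => /and3P [_ h' _]; move: h'; rewrite ltnNge h.
  by rewrite E U_triv //; apply: rt_refl.
Qed.

Lemma LE_ext x y c1 c2 t : lam_equiv lam x y c1 c2 -> path Defs.cover y t ->
  lam_equiv lam x (last y t) (c1 ++ t) (c2 ++ t).
Proof.
move=> [H1 H2 R] Ht; split; try exact: maxchain_ext.
by apply: (crt_map (f := fun u => u ++ t)) R => u v; apply: qstep_ext.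
Qed.

Lemma glue x0 s a : a != [::] -> last x0 s = hd a -> (x0 :: s) ++ behead a = belast x0 s ++ a.
Proof.
case: a => // a0 a' _ /= Hl.
by rewrite -cat_cons (lastI x0 s) Hl cat_rcons.
Qed.

Lemma maxchain_glue X y a : inC bot X -> maxchain (last bot X) y a -> maxchain bot y (X ++ behead a).
Proof.
case: X => // x0 s /andP [/eqP -> Hp]; case: a => // a0 a' /and3P [/eqP Ha Ha' /eqP Hl] /=.
rewrite /= in Ha; by rewrite eqxx cat_path Hp -Ha Ha' last_cat -Ha Hl eqxx.
Qed.

Lemma LE_pre X a b : inC bot X -> forall y, lam_equiv lam (last bot X) y a b ->
  lam_equiv lam bot y (X ++ behead a) (X ++ behead b).
Proof.
move=> HX y [Ha Hb R]; split; try exact: maxchain_glue.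
case: X HX Ha Hb R => // x0 s HX Ha Hb R.
have gl : forall u, maxchain (last bot (x0 :: s)) y u -> (x0 :: s) ++ behead u = belast x0 s ++ u.
  move=> u; rewrite maxchainE => /and3P [Ok /eqP H _]; apply: glue; last by rewrite H.
  by case: (u) Ok.
rewrite !gl //.
apply: (crt_map (f := fun u => belast x0 s ++ u)) R => u v [Hu [Hv [i Hi]]].
have Mu := maxchain_glue HX Hu; have Mv := maxchain_glue HX Hv.
rewrite !gl // in Mu Mv.
have u0 : u != [::] by case: (u) Hu.
have v0 : v != [::] by case: (v) Hv.
case: (posnP i) Hi => [->|i0] Hi.
  by case: Hi => ->; rewrite U_triv //; apply: rt_refl.
apply: rt_step; split => //; split => //; exists (size (belast x0 s) + i).
by case: Hi => ->; [left|right]; rewrite U_shift.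
Qed.


Notation cls := (clsrel lam bot).

Lemma inC_cat c t : inC bot c -> inC bot (c ++ t) = path Defs.cover (last bot c) t.
Proof. by case: c => // x0 s /andP [/eqP -> Hp] /=; rewrite eqxx cat_path Hp. Qed.

Lemma inC_pre c t : c != [::] -> inC bot (c ++ t) -> inC bot c.
Proof. by case: c => // x0 s _ /= /andP [-> ]; rewrite cat_path => /andP []. Qed.

Lemma inC_ne c : inC bot c -> c != [::].
Proof. by case: c. Qed.

Lemma cl_refl c : inC bot c -> cls c c.
Proof. by move=> H; split => //; apply: LE_refl; rewrite -inC_max. Qed.

Lemma cl_sym a b : cls a b -> cls b a.
Proof. by move=> [Ha Hb E R]; split => //; rewrite -E; apply: LE_sym. Qed.

Lemma cl_trans a b c : cls a b -> cls b c -> cls a c.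
Proof.
move=> [Ha Hb E R] [_ Hc E' R']; split => //; first by rewrite E.
by apply: LE_trans R _; rewrite E.
Qed.

Lemma cl_inv a b : cls a b -> size a = size b /\ perm_eq (labels lam a) (labels lam b).
Proof. by move=> [_ _ _ R]; apply: LE_inv R. Qed.

Lemma cl_ext a b t : cls a b -> path Defs.cover (last bot a) t -> cls (a ++ t) (b ++ t).
Proof.
move=> [Ha Hb E R] Ht; split.
- by rewrite inC_cat.
- by rewrite inC_cat // -E.
- by rewrite !last_cat E.
- by rewrite last_cat; apply: LE_ext.
Qed.

Lemma cover_lt x y : Defs.cover x y -> (x < y)%O.
Proof. by case/andP. Qed.

Lemma path_lt x s : path Defs.cover x s -> path (fun p1 p2 : P => (p1 < p2)%O) x s.
Proof. by apply: sub_path => p1 p2 /cover_lt. Qed.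

Lemma prefix_sub x cs es : path Defs.cover x cs -> path Defs.cover x es ->
  {subset cs <= es} -> exists t, es = cs ++ t.
Proof.
elim: cs x es => [|c1 cs IH] x es; first by exists es.
move=> /= /andP [xc Hc] He Hs.
case: es He Hs => [|e1 es] He Hs; first by have := Hs c1; rewrite inE eqxx => /(_ isT).
have E1 : c1 = e1.
  have := Hs c1; rewrite !inE eqxx /= => /(_ isT) /orP [/eqP //|ce].
  move: He => /= /andP [xe He].
  have := order_path_min (@lt_trans _ _) (path_lt He) => /allP /(_ c1 ce) ec.
  by move: xc => /andP [_ /forallP /(_ e1)]; rewrite (cover_lt xe) ec.
subst e1; move: He => /= /andP [_ He].
have [t Et] : exists t, es = cs ++ t.
  apply: (IH c1) => // y yc.
  have := Hs y; rewrite !inE yc orbT => /(_ isT) /orP [/eqP Ey|//].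
  have := order_path_min (@lt_trans _ _) (path_lt Hc) => /allP /(_ y yc).
  by rewrite Ey ltxx.
by exists t; rewrite Et.
Qed.

Lemma inC_prefix c e : inC bot c -> inC bot e -> {subset c <= e} -> exists t, e = c ++ t.
Proof.
case: c => // c0 cs /andP [/eqP -> Hc]; case: e => // e0 es /andP [/eqP -> He] Hs.
have [t Et] : exists t, es = cs ++ t.
  apply: (prefix_sub Hc He) => y yc.
  have := Hs y; rewrite !inE yc orbT => /(_ isT) /orP [/eqP Ey|//].
  have := order_path_min (@lt_trans _ _) (path_lt Hc) => /allP /(_ y yc).
  by rewrite Ey ltxx.
by exists t; rewrite Et.
Qed.

Lemma Qle_char X Y : Qle lam bot X Y -> inC bot X /\ exists t, cls Y (X ++ t).
Proof.
elim => [c e [Hc He [c' [e' [C1 C2 Hs]]]]|X' Z Y' _ [HX [t1 E1]] _ [HZ [t2 E2]]].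
- split => //.
  have C1' := C1; have C2' := C2.
  case: C1' => _ Hc' Ecl _; case: C2' => _ He' _ _.
  have [t Et] := inC_prefix Hc' He' Hs.
  exists t; apply: cl_trans C2 _; rewrite Et; apply: cl_sym; apply: cl_ext => //.
  by move: He'; rewrite Et inC_cat // Ecl.
- split => //; exists (t1 ++ t2); apply: (cl_trans E2); rewrite catA.
  apply: cl_ext => //.
  by case: E2 => _ /= H2 _ _; move: H2; rewrite inC_cat.
Qed.

Lemma Qle_of X Y t : inC bot X -> cls Y (X ++ t) -> Qle lam bot X Y.
Proof.
move=> HX E; apply: t_step; split => //; first by case: E.
exists X, (X ++ t); split => //; first exact: cl_refl.
by move=> u uX; rewrite mem_cat uX.
Qed.


Lemma Qlt_size X Y : Qlt lam bot X Y -> size X < size Y.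
Proof.
move=> [/Qle_char [HX [t E]] N].
have [Hs _] := cl_inv E; rewrite Hs size_cat.
case: t E {Hs} => [|w t] E; last by rewrite /=; lia.
by exfalso; apply: N; rewrite cats0 in E; apply: cl_sym.
Qed.

Lemma Qcover_char X Y : Qcover lam bot X Y -> inC bot X /\ exists w, cls Y (X ++ [:: w]).
Proof.
move=> [[/Qle_char [HX [t E]] N] NF]; split => //.
case: t E => [|w t] E; first by exfalso; apply: N; rewrite cats0 in E; apply: cl_sym.
exists w; case: t E => [//|w' t] E; exfalso; apply: NF.
have Hin : inC bot (X ++ [:: w]).
  by apply: (inC_pre (t := w' :: t)); [case: (X)|rewrite -catA; case: E].
have [Hs _] := cl_inv E.
exists (X ++ [:: w]); split => //; split.
- split; first by apply: (Qle_of (t := [:: w])) => //; apply: cl_refl.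
  by move=> /cl_inv [H _]; move: H; rewrite size_cat /=; lia.
- split; first by apply: (Qle_of (t := w' :: t)) => //; rewrite -catA.
  by move=> /cl_inv [H _]; move: H Hs; rewrite !size_cat /=; lia.
Qed.

Lemma Qcover_of X w : inC bot X -> inC bot (X ++ [:: w]) -> Qcover lam bot X (X ++ [:: w]).
Proof.
move=> HX Hw; split.
  split; first by apply: (Qle_of (t := [:: w])) => //; apply: cl_refl.
  by move=> /cl_inv [H _]; move: H; rewrite size_cat /=; lia.
move=> [f [Hf [L1 L2]]].
have := Qlt_size L1; have := Qlt_size L2; rewrite size_cat /=; lia.
Qed.

Lemma labels_rcons X w : X != [::] -> labels lam (X ++ [:: w]) = rcons (labels lam X) (lam (last bot X) w).
Proof. by case: X => // x0 s _ /=; rewrite pairmap_cat cats1. Qed.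

Lemma lamstar_perm a b l : perm_eq (labels lam b) (l :: labels lam a) -> lamstar lam a b = Some l.
Proof.
move=> H; rewrite /lamstar.
have H' : perm_eq (labels lam b) (labels lam a ++ [:: l]) by rewrite (perm_trans H) // cats1 perm_sym perm_rcons.
have := mdiff_perm H'.
case E: (mdiff _ _) => [|m [|m' r]] Hp; try by have := perm_size Hp.
have : m \in [:: l] by rewrite -(perm_mem Hp) inE.
by rewrite inE => /eqP ->; rewrite H.
Qed.

Lemma Qcover_info A B : Qcover lam bot A B ->
  [/\ cls B (A ++ [:: last bot B]), Defs.cover (last bot A) (last bot B)
    & lamstar lam A B = Some (lam (last bot A) (last bot B))].
Proof.
move=> /Qcover_char [HA [w E]].
have Lw : last bot B = w by case: E => _ _ -> _; rewrite last_cat.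
rewrite Lw; split => //.
  by case: E => _ H _ _; move: H; rewrite inC_cat //= andbT.
apply: lamstar_perm; have [_ Hp] := cl_inv E.
rewrite (perm_trans Hp) // labels_rcons ?inC_ne // perm_rcons. exact: perm_refl.
Qed.


Lemma nthc_map cs m : m < size cs -> nthc (map (last bot) cs) m = last bot (nth [::] cs m).
Proof. by move=> h; rewrite /nthc (nth_map [::]). Qed.

Lemma unique_aux X Y cs : Qmaxchain lam bot X Y cs -> Qascent_free lam cs ->
  [/\ forall j, j < size cs -> cls (nth [::] cs j) (X ++ take j (behead (map (last bot) cs))),
      maxchain (last bot X) (last bot Y) (map (last bot) cs),
      cls Y (X ++ behead (map (last bot) cs)) & normal (map (last bot) cs)].
Proof.
move=> [Hsz HX HY Hcov] Haf.
set z := map (last bot) cs.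
have Sz : size (behead z) = (size cs).-1 by rewrite size_behead size_map.
have P1 : forall j, j < size cs -> cls (nth [::] cs j) (X ++ take j (behead z)).
  elim => [_|j IH hj]; first by rewrite take0 cats0; apply: cl_sym.
  have [E Cv _] := Qcover_info (Hcov j hj).
  have IH' := IH (ltnW hj).
  apply: (cl_trans E).
  rewrite (take_nth bot); last by rewrite Sz; lia.
  have -> : nth bot (behead z) j = last bot (nth [::] cs j.+1).
    by rewrite nth_behead /z (nth_map [::]).
  rewrite -cats1 catA; apply: cl_ext => //=; by rewrite Cv.
have HYz : cls Y (X ++ behead z).
  apply: (cl_trans HY); rewrite -(nth_last [::]).
  have := P1 (size cs).-1; rewrite -Sz take_size; apply; lia.
split => //.
- have Ez : z = last bot X :: behead z.
    move: (HX) Hsz; rewrite /z; case: (cs) => // c0 cs' [_ _ -> _] _ //.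
  case: (HYz) => _ Hin EL _; case: (HX) => HXc _ _ _.
  move: Hin; rewrite inC_cat // => Hp.
  by rewrite Ez /= eqxx Hp /= EL last_cat eqxx.
- move=> k; apply/negP => /and3P [k0 ksz Hlt].
  rewrite size_map in ksz.
  have j2 : (k.-1).+2 < size cs by lia.
  have [_ _ L1] := Qcover_info (Hcov k.-1 (ltnW j2)).
  have [_ _ L2] := Qcover_info (Hcov k.-1.+1 j2).
  apply: (Haf k.-1 j2 _ _ L1 L2).
  move: Hlt; rewrite !nthc_map; try lia.
  by rewrite prednK.
Qed.


Lemma last_gt x s : path Defs.cover x s -> s != [::] -> (x < last x s)%O.
Proof.
case: s => // y s Hp _.
have := order_path_min (@lt_trans _ _) (path_lt Hp) => /allP; apply.
by rewrite /= mem_last.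
Qed.

Lemma maxchain_same x c : maxchain x x c -> c = [:: x].
Proof.
case: c => // x0 s /and3P [/eqP -> Hp /eqP Hl].
case: s Hp Hl => // y s Hp Hl; have := last_gt Hp isT; rewrite Hl ltxx //.
Qed.

Lemma maxchain_lt x y c : maxchain x y c -> x != y -> (x < y)%O.
Proof.
case: c => // x0 s /and3P [/eqP -> Hp /eqP Hl] Nxy.
case: s Hp Hl => [|y' s] Hp Hl; first by rewrite -Hl eqxx in Nxy.
by rewrite -Hl; apply: last_gt.
Qed.

Lemma inC_bot X : inC bot X -> last bot X = bot -> X = [:: bot].
Proof.
case: X => // x0 s /andP [/eqP -> Hp] /= Hl.
case: s Hp Hl => // y s Hp Hl; have := last_gt Hp isT; rewrite Hl ltxx //.
Qed.

Hypothesis Hcan : cancellative lam.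

Lemma z_unique X Y z z' : inC bot X ->
  maxchain (last bot X) (last bot Y) z -> maxchain (last bot X) (last bot Y) z' ->
  cls Y (X ++ behead z) -> cls Y (X ++ behead z') -> normal z -> normal z' -> z = z'.
Proof.
move=> HX M M' E E' N N'.
have E2 := cl_trans (cl_sym E) E'.
have Ly : last bot (X ++ behead z) = last bot Y by case: E.
case: E2 => _ _ _; rewrite Ly => LE.
case: (eqVneq (last bot X) bot) => Hx.
  have EX := inC_bot HX Hx.
  have gz : forall u, maxchain (last bot X) (last bot Y) u -> X ++ behead u = u.
    move=> u; rewrite EX /=; case: u => // u0 u' /and3P [/eqP -> _ _] //.
  by rewrite !gz in LE => //; apply: (LE_normal LE).
case: (eqVneq (last bot X) (last bot Y)) => Hxy.
  by rewrite Hxy in M M'; rewrite (maxchain_same M) (maxchain_same M').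
have bx : (bot < last bot X)%O by rewrite lt_neqAle eq_sym Hx Hbot.
have xy := maxchain_lt M Hxy.
have MX : maxchain bot (last bot X) X by rewrite -inC_max.
have := Hcan bx xy MX M M' LE => LE'.
exact: (LE_normal LE').
Qed.

Lemma last_pref X n m : hd n = last bot X -> n != [::] -> m < size n ->
  last bot (X ++ take m (behead n)) = nthc n m.
Proof.
case: n => // x n' /= Hh _ hm.
case: m hm => [|m] hm; first by rewrite take0 cats0 /nthc /= Hh.
rewrite /= ltnS in hm; rewrite (take_nth bot) //.
rewrite -cats1 catA last_cat /= /nthc /=.
exact: set_nth_default.
Qed.

Lemma exist_aux X Y : inC bot X -> Qle lam bot X Y ->
  exists cs, Qmaxchain lam bot X Y cs /\ Qascent_free lam cs.
Proof.
move=> HX /Qle_char [_ [t E]].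
have [Hin1 Hin2 EL R] := E.
have Hp : path Defs.cover (last bot X) t by move: Hin2; rewrite inC_cat.
have Ma : maxchain (last bot X) (last bot Y) (last bot X :: t).
  by rewrite /= eqxx Hp /= EL last_cat eqxx.
have [n [LEn Nn]] := nf_LE Ma.
have LE2 := LE_pre HX LEn; rewrite /= in LE2.
have [_ Mn _] := LEn.
have Okn : okc n by move: Mn; rewrite maxchainE => /and3P [].
have n0 : n != [::] by case: (n) Okn.
have Hdn : hd n = last bot X by move: Mn; rewrite maxchainE => /and3P [_ /eqP -> _].
have [M1 M2 _] := LE2.
have HYn : cls Y (X ++ behead n).
  have L2 : last bot (X ++ behead n) = last bot Y.
    by move: M2; rewrite maxchainE => /and3P [_ _ /eqP ->].
  apply: (cl_trans E); split => //.
  - by rewrite inC_max L2.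
  - by rewrite L2 EL.
  - by rewrite -EL.
have Inb : inC bot (X ++ behead n) by case: HYn.
have Ip : forall j, inC bot (X ++ take j (behead n)).
  move=> j; apply: (inC_pre (t := drop j (behead n))); first by case: (X) HX.
  by rewrite -catA cat_take_drop.
set cs := mkseq (fun j => X ++ take j (behead n)) (size n).
have Szn : size (behead n) = (size n).-1 by rewrite size_behead.
have Nth : forall j, j < size n -> nth [::] cs j = X ++ take j (behead n).
  by move=> j hj; rewrite nth_mkseq.
have Cov : forall j, j.+1 < size n -> Qcover lam bot (nth [::] cs j) (nth [::] cs j.+1).
  move=> j hj.
  have hj' : j < size n by apply: ltnW.
  have hb : j < size (behead n) by rewrite Szn -ltnS prednK // (leq_ltn_trans _ hj).
  rewrite !Nth // (take_nth bot) //.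
  rewrite -cats1 catA; apply: Qcover_of => //.
  by rewrite -catA cats1 -(take_nth bot).
have Sc : size cs = size n by rewrite size_mkseq.
exists cs; split.
- split.
  + by rewrite Sc lt0n size_eq0.
  + by rewrite Nth ?take0 ?cats0; [apply: cl_refl | rewrite lt0n size_eq0].
  + rewrite -(nth_last [::]) Sc Nth; last by rewrite prednK // lt0n size_eq0.
    by rewrite -Szn take_size.
  + by move=> j; rewrite Sc; apply: Cov.
- move=> j hj l1 l2 L1 L2.
  rewrite Sc in hj.
  have [_ _ L1'] := Qcover_info (Cov j (ltnW hj)).
  have [_ _ L2'] := Qcover_info (Cov j.+1 hj).
  rewrite L1 in L1'; rewrite L2 in L2'; case: L1' => ->; case: L2' => ->.
  have h1 : j < size n by apply: ltnW; apply: ltnW.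
  have h2 : j.+1 < size n by apply: ltnW.
  rewrite !Nth // !last_pref //.
  move=> Hlt; have := Nn j.+1; rewrite /asc /= hj Hlt //.
Qed.


Lemma main_star : ER_star lam bot.
Proof.
move=> X Y HX HY Hle; split; first exact: exist_aux.
move=> cs cs' Q A Q' A'.
have [P1 M E N] := unique_aux Q A.
have [P1' M' E' N'] := unique_aux Q' A'.
have Ez := z_unique HX M M' E E' N N'.
have Sz : size cs = size cs' by rewrite -(size_map (last bot) cs) Ez size_map.
split => // j hj.
have hj' : j < size cs' by rewrite -Sz.
apply: (cl_trans (P1 j hj)); rewrite Ez; apply: cl_sym; exact: P1' j hj'.
Qed.

End Main.

Local Open Scope order_scope.

Theorem proposition3p21 (d : Order.disp_t) (P : finPOrderType d)
  (d' : Order.disp_t) (L : porderType d') (bot : P) (lam : P -> P -> L) :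
  (forall x : P, bot <= x) -> graded bot ->
  ER_labeling lam -> switching lam bot -> braid lam -> cancellative lam ->
  ER_star lam bot.
Proof.
move=> Hbot _ HER Hsw Hbr Hcan.
exact: (main_star Hbot HER Hsw Hbr Hcan).
Qed.
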